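(* Let $p\ge 1$, $n,m\ge 1$, and let $\tilde X_1,\dots,\tilde X_n\in\mathbb R^p$, $\tilde Y_1,\dots,\tilde Y_n\in\mathbb R$ and $(X_1,Y_1),\dots,(X_m,Y_m)\in\mathbb R^p\times\mathbb R$ be given data. Let $f(t)=c_\alpha\exp(-d^{-\alpha}|t|^\alpha)$, $t\in\mathbb R$, for some $\alpha\ge 1$, $d>0$ and $c_\alpha=\frac{\alpha}{2d\Gamma(1/\alpha)}$. Define, for $\beta\in\mathbb R^p$, $$\ell_{n,m}(\beta)=\frac{1}{n+m}\sum_{j=1}^n\log\Big(\frac1n\sum_{i=1}^n f(\tilde Y_j-\beta^\top\tilde X_i)\Big)+\frac{1}{n+m}\sum_{k=1}^m\log f(Y_k-\beta^\top X_k).$$ If the matrix $M\in\mathbb R^{m\times p}$ whose $k$-th row is $X_k^\top$ has $\operatorname{rank}(M)=p$, then $\ell_{n,m}$ admits at least one maximizer over $\mathbb R^p$.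
   Context: This is the ''semi-supervised learning empirical log-likelihood'' for the linear model $Y=\beta_0^\top X+\epsilon$ with noise density $f$, combining an unmatched sample ($\tilde X_i$, $\tilde Y_j$) and a matched sample $(X_k,Y_k)$. *)

(* Defs.v *)
From HB Require Import structures.
From mathcomp Require Import all_boot all_order all_algebra.
From mathcomp Require Import all_classical all_reals all_analysis.
Set Implicit Arguments. Unset Strict Implicit. Unset Printing Implicit Defensive.
Import Order.TTheory GRing.Theory Num.Theory.
Local Open Scope classical_set_scope.
Local Open Scope ring_scope.

Definition Gamma {R : realType} (s : R) : R :=
  fine (\int[@lebesgue_measure R]_(t in `]0%R, +oo[%classic)
          ((t `^ (s - 1)) * expR (- t))%:E)%E.

Definition c_alpha {R : realType} (alpha d : R) : R :=
  alpha / (2 * d * Gamma (alpha^-1)).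

Definition gg_density {R : realType} (alpha d : R) (t : R) : R :=
  c_alpha alpha d * expR (- ((d `^ (- alpha)) * (`|t| `^ alpha))).

Definition dotp {R : realType} (p : nat) (b x : 'cV[R]_p) : R :=
  \sum_(i < p) b i 0 * x i 0.

Definition ssl_loglik {R : realType} (alpha d : R) (p n m : nat)
  (Xt : 'I_n -> 'cV[R]_p) (Yt : 'I_n -> R)
  (X : 'I_m -> 'cV[R]_p) (Y : 'I_m -> R) (b : 'cV[R]_p) : R :=
  (n + m)%:R^-1 * \sum_(j < n)
     ln (n%:R^-1 * \sum_(i < n) gg_density alpha d (Yt j - dotp b (Xt i)))
  + (n + m)%:R^-1 * \sum_(k < m) ln (gg_density alpha d (Y k - dotp b (X k))).

Definition design_mx {R : realType} (p m : nat) (X : 'I_m -> 'cV[R]_p)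
  : 'M[R]_(m, p) := \matrix_(k < m, i < p) X k i 0.

(* Main.v *)
Require Import Defs.
From HB Require Import structures.
From mathcomp Require Import all_boot all_order all_algebra.
From mathcomp Require Import all_classical all_reals all_analysis.
From mathcomp Require Import ring lra.
Import Order.TTheory GRing.Theory Num.Theory.
Import numFieldNormedType.Exports.
Local Open Scope classical_set_scope.
Local Open Scope ring_scope.
Lemma cvg_eqr {T : Type} {U : topologicalType} (F : set_system T) (f : T -> U) (l l' : U) :
  l' = l -> f @ F --> l -> f @ F --> l'.
Proof. by move=> ->. Qed.

Lemma pow_cont (R : realType) (a : R) : 1 <= a -> continuous (fun t : R => `|t| `^ a).
Proof.
move=> a1 t.
have [->|t0] := eqVneq t 0.
  apply/cvgrPdist_lt => e e0 /=.
  rewrite normr0 powR0 ?gt_eqF//; last by lra.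
  have : \forall x \near (0:R), `|x| < Num.min e 1.
    apply: (@cvgr0_norm_lt R R^o _ _ _ (fun x => x) cvg_id); by rewrite lt_min e0 ltr01.
  apply: filterS => x.
  rewrite lt_min => /andP[xe x1].
  rewrite sub0r normrN ger0_norm ?powR_ge0//.
  have [->|x0] := eqVneq x 0; first by rewrite normr0 powR0 ?gt_eqF//; lra.
  apply: le_lt_trans xe; apply: ge1r_powR => //.
  by rewrite normr_gt0 x0 ltW.
have tp : 0 < `|t| by rewrite normr_gt0.
have hc : {for t, continuous (fun x : R => expR (a * ln `|x|))}.
  apply: continuous_comp; last exact: continuous_expR.
  apply: continuousM; first exact: cvg_cst.
  apply: continuous_comp; first exact: norm_continuous.
  exact: continuous_ln.
have E : `|t| `^ a = expR (a * ln `|t|) by rewrite /powR gt_eqF// mulrC.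
rewrite /continuous_at; apply: cvg_eqr; first exact: E.
have H : \forall x \near t, expR (a * ln `|x|) = `|x| `^ a.
  near=> x.
  have hx : `|t - x| < `|t|.
    by near: x; exact: (@cvgr_dist_lt R R^o _ _ _ (fun x => x) t cvg_id `|t| tp).
  have x0 : x != 0 by apply: contraTneq hx => ->; rewrite subr0 ltxx.
  by rewrite /powR normr_eq0 (negbTE x0) mulrC.
exact: (cvg_trans (near_eq_cvg H) hc).
Unshelve. all: by end_near. Qed.

Lemma gg_pos (R : realType) (alpha d t : R) : 0 < c_alpha alpha d -> 0 < gg_density alpha d t.
Proof. by move=> c0; rewrite /gg_density mulr_gt0// expR_gt0. Qed.

Lemma gg_le (R : realType) (alpha d t : R) : 0 <= c_alpha alpha d -> gg_density alpha d t <= c_alpha alpha d.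
Proof.
move=> c0; rewrite /gg_density ler_piMr// expR_le1 oppr_le0.
by rewrite mulr_ge0// powR_ge0.
Qed.

Lemma gg_le0 (R : realType) (alpha d t : R) : c_alpha alpha d <= 0 -> gg_density alpha d t <= 0.
Proof. by move=> c0; rewrite /gg_density mulr_le0_ge0// expR_ge0. Qed.

Lemma ln_gg (R : realType) (alpha d t : R) : 0 < c_alpha alpha d ->
  ln (gg_density alpha d t) = ln (c_alpha alpha d) - d `^ (- alpha) * `|t| `^ alpha.
Proof.
by move=> c0; rewrite /gg_density lnM ?posrE ?expR_gt0// expRK.
Qed.

Lemma gg_cont (R : realType) (alpha d : R) : 1 <= alpha -> continuous (gg_density alpha d).
Proof.
move=> a1 t; rewrite /gg_density.
apply: cvgM; first exact: cvg_cst.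
apply: continuous_comp; last exact: continuous_expR.
apply: cvgN.
apply: cvgM; first exact: cvg_cst.
exact: pow_cont.
Qed.

Lemma pow_lb (R : realType) (alpha t : R) : 1 <= alpha -> `|t| - 1 <= `|t| `^ alpha.
Proof.
move=> a1; have [t1|t1] := lerP 1 `|t|.
  by apply: le_trans (le1r_powR _ _) => //; rewrite gerBl.
by apply: le_trans (powR_ge0 _ _); rewrite subr_le0 ltW.
Qed.

Lemma loglik0 (R : realType) (alpha d : R) (p n m : nat)
  (Xt : 'I_n -> 'cV[R]_p) (Yt : 'I_n -> R)
  (X : 'I_m -> 'cV[R]_p) (Y : 'I_m -> R) b :
  c_alpha alpha d <= 0 -> ssl_loglik alpha d Xt Yt X Y b = 0.
Proof.
move=> c0; rewrite /ssl_loglik.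
rewrite big1 ?mulr0 ?add0r; last first.
  move=> j _; rewrite ln0//; apply: mulr_ge0_le0; first by rewrite invr_ge0.
  by apply: sumr_le0 => i _; exact: gg_le0.
by rewrite big1 ?mulr0// => k _; rewrite ln0// gg_le0.
Qed.

Lemma upper (R : realType) (alpha d : R) (p n m : nat)
  (Xt : 'I_n -> 'cV[R]_p) (Yt : 'I_n -> R)
  (X : 'I_m -> 'cV[R]_p) (Y : 'I_m -> R) b :
  (1 <= n)%N -> 0 < c_alpha alpha d ->
  ssl_loglik alpha d Xt Yt X Y b <= ln (c_alpha alpha d) -
    (n + m)%:R^-1 * (d `^ (- alpha) * \sum_(k < m) `|Y k - dotp b (X k)| `^ alpha).
Proof.
move=> n1 c0; set c := c_alpha alpha d.
rewrite /ssl_loglik.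
have h1 : \sum_(j < n) ln (n%:R^-1 * \sum_(i < n) gg_density alpha d (Yt j - dotp b (Xt i)))
    <= n%:R * ln c.
  have -> : n%:R * ln c = \sum_(j < n) ln c by rewrite sumr_const card_ord mulr_natl.
  apply: ler_sum => j _.
  have np : (0 : R) < n%:R by rewrite ltr0n.
  have sp : 0 < \sum_(i < n) gg_density alpha d (Yt j - dotp b (Xt i)).
    rewrite (bigD1 (Ordinal n1)) //=.
    have := gg_pos _ _ _ (Yt j - dotp b (Xt (Ordinal n1))) c0.
    have : 0 <= \sum_(i < n | i != Ordinal n1) gg_density alpha d (Yt j - dotp b (Xt i)).
      by apply: sumr_ge0 => i _; apply: ltW; apply: gg_pos.
    lra.
  have lp : 0 < n%:R^-1 * \sum_(i < n) gg_density alpha d (Yt j - dotp b (Xt i)).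
    by apply: mulr_gt0 => //; rewrite invr_gt0.
  rewrite ler_ln ?posrE //.
  rewrite ler_pdivrMl//.
  have -> : n%:R * c = \sum_(i < n) c by rewrite sumr_const card_ord mulr_natl.
  by apply: ler_sum => i _; apply: gg_le; apply: ltW.
have h2 : \sum_(k < m) ln (gg_density alpha d (Y k - dotp b (X k))) =
    m%:R * ln c - d `^ (- alpha) * \sum_(k < m) `|Y k - dotp b (X k)| `^ alpha.
  rewrite (eq_bigr _ (fun k _ => ln_gg _ _ _ (Y k - dotp b (X k)) c0)) sumrB.
  by rewrite sumr_const card_ord mulr_natl -mulr_sumr.
have h2' : \sum_(k < m) ln (gg_density alpha d (Y k - dotp b (X k))) <=
    m%:R * ln c - d `^ (- alpha) * \sum_(k < m) `|Y k - dotp b (X k)| `^ alpha by rewrite h2.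
have k0 : (0 : R) < (n + m)%:R by rewrite ltr0n addn_gt0 n1.
have e : (n + m)%:R^-1 * (n + m)%:R = 1 :> R by rewrite mulVf// gt_eqF.
rewrite -mulrDr.
apply: le_trans (ler_wpM2l _ (lerD h1 h2')) _.
  by rewrite ltW// invr_gt0.
rewrite natrD in e *.
set S := d `^ (- alpha) * _.
have -> : n%:R * ln c + (m%:R * ln c - S) = (n%:R + m%:R) * ln c - S by ring.
by rewrite mulrBr mulrA e mul1r.
Qed.

Lemma le_sum1 (R : realType) (I : finType) (F : I -> R) (j : I) :
  (forall i, 0 <= F i) -> F j <= \sum_i F i.
Proof.
move=> F0; rewrite (bigD1 j) //= lerDl.
by apply: sumr_ge0 => i _.
Qed.

Lemma coercive (R : realType) (p m : nat) (X : 'I_m -> 'cV[R]_p) :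
  \rank (design_mx X) = p ->
  exists C : R, 0 <= C /\ forall (b : 'cV[R]_p) i,
    `|b i 0| <= C * \sum_(k < m) `|dotp b (X k)|.
Proof.
move=> rk.
have /row_fullP [N hN] : row_full (design_mx X) by rewrite /row_full rk.
exists (\sum_i \sum_k `|N i k|); split.
  by apply: sumr_ge0 => i _; apply: sumr_ge0.
move=> b i.
have hb : b i 0 = \sum_k N i k * dotp b (X k).
  transitivity ((N *m (design_mx X *m b)) i 0); first by rewrite mulmxA hN mul1mx.
  rewrite mxE; apply: eq_bigr => k _; rewrite mxE /dotp; congr (_ * _).
  by apply: eq_bigr => j _; rewrite mxE mulrC.
rewrite hb; apply: le_trans (ler_norm_sum _ _ _) _.
rewrite mulr_sumr; apply: ler_sum => k _; rewrite normrM.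
apply: ler_wpM2r => //.
apply: le_trans (le_sum1 _ _ (fun i' => \sum_k `|N i' k|) i _); last first.
  by move=> i'; apply: sumr_ge0.
by apply: (le_sum1 _ _ (fun k => `|N i k|)).
Qed.

Lemma contD (R : realType) (T : topologicalType) (f g : T -> R) :
  continuous f -> continuous g -> continuous (fun x => f x + g x).
Proof. by move=> hf hg x; apply: cvgD; [exact: hf|exact: hg]. Qed.

Lemma contM (R : realType) (T : topologicalType) (f g : T -> R) :
  continuous f -> continuous g -> continuous (fun x => f x * g x).
Proof. by move=> hf hg x; apply: cvgM; [exact: hf|exact: hg]. Qed.

Lemma contC (R : realType) (T : topologicalType) (c : R) :
  continuous (fun _ : T => c).
Proof. by move=> x; exact: cvg_cst. Qed.

Lemma contN (R : realType) (T : topologicalType) (f : T -> R) :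
  continuous f -> continuous (fun x => - f x).
Proof. by move=> hf x; apply: cvgN; exact: hf. Qed.

Lemma contComp (R : realType) (T : topologicalType) (f : T -> R) (g : R -> R) :
  continuous f -> continuous g -> continuous (fun x => g (f x)).
Proof. by move=> hf hg x; apply: continuous_comp; [exact: hf|exact: hg]. Qed.

Lemma contln (R : realType) (T : topologicalType) (f : T -> R) :
  continuous f -> (forall x, 0 < f x) -> continuous (fun x => ln (f x)).
Proof.
by move=> hf hp x; apply: continuous_comp; [exact: hf|exact: continuous_ln].
Qed.

Lemma sum_cont (R : realType) (T : topologicalType) (I : finType) (f : I -> T -> R) :
  (forall i, continuous (f i)) -> continuous (fun v => \sum_i f i v).
Proof.
move=> hf; apply: continuous_big => //; exact: add_continuous.
Qed.

Lemma dotp_cont (R : realType) (p : nat) (x : 'cV[R]_p) :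
  continuous (fun v : 'rV[R]_p => dotp v^T x).
Proof.
have -> : (fun v : 'rV[R]_p => dotp v^T x) = (fun v => \sum_(i < p) v 0 i * x i 0).
  by apply: funext => v; rewrite /dotp; apply: eq_bigr => i _; rewrite mxE.
apply: sum_cont => i v.
apply: cvgM; [exact: nbhs_filter|exact: coord_continuous|]. exact: (@cvg_cst _ (x i 0) _ _ (nbhs_filter v)).
Qed.

Lemma F_cont (R : realType) (alpha d : R) (p n m : nat)
  (Xt : 'I_n -> 'cV[R]_p) (Yt : 'I_n -> R)
  (X : 'I_m -> 'cV[R]_p) (Y : 'I_m -> R) :
  (1 <= n)%N -> 1 <= alpha -> 0 < c_alpha alpha d ->
  continuous (fun v : 'rV[R]_p => ssl_loglik alpha d Xt Yt X Y v^T).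
Proof.
move=> n1 a1 c0.
have gc : forall (y : R) (x : 'cV[R]_p),
    continuous (fun v : 'rV[R]_p => gg_density alpha d (y - dotp v^T x)).
  move=> y x; apply: contComp; last exact: gg_cont.
  by apply: contD; [exact: contC | apply: contN; exact: dotp_cont].
rewrite /ssl_loglik.
apply: contD; apply: contM; try exact: contC.
  apply: sum_cont => j.
  apply: contln.
    apply: contM; first exact: contC.
    by apply: sum_cont => i; apply: gc.
  move=> w.
  apply: mulr_gt0; first by rewrite invr_gt0 ltr0n.
  rewrite (bigD1 (Ordinal n1)) //=.
  have := gg_pos _ _ _ (Yt j - dotp w^T (Xt (Ordinal n1))) c0.
  have : 0 <= \sum_(i < n | i != Ordinal n1) gg_density alpha d (Yt j - dotp w^T (Xt i)).
    by apply: sumr_ge0 => i _; apply: ltW; apply: gg_pos.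
  lra.
apply: sum_cont => k.
apply: contln; first exact: gc.
by move=> w; exact: gg_pos.
Qed.

Lemma tri_aux (R : realType) (alpha t y : R) : 1 <= alpha ->
  `|t| - `|y| - 1 <= `|y - t| `^ alpha.
Proof.
move=> a1; apply: le_trans (pow_lb _ _ _ a1).
have h : `|t| <= `|y - t| + `|y|.
  by rewrite distrC -{1}(subrK y t) ler_normD.
move: h; move: `|t| `|y - t| `|y| => a1' a2 a3 h.
lra.
Qed.

Lemma aux1 (R : realType) (x y z w : R) : x <= w - z -> y <= x -> z <= w - y.
Proof. lra. Qed.

Lemma aux2 (R : realType) (T SY M S Q : R) : T - SY - M <= S -> S <= Q -> T <= Q + SY + M.
Proof. lra. Qed.

Theorem lemma1 (R : realType) (p n m : nat) (alpha d : R)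
  (Xt : 'I_n -> 'cV[R]_p) (Yt : 'I_n -> R)
  (X : 'I_m -> 'cV[R]_p) (Y : 'I_m -> R) :
  (1 <= p)%N -> (1 <= n)%N -> (1 <= m)%N ->
  1 <= alpha -> 0 < d ->
  \rank (design_mx X) = p ->
  exists b : 'cV[R]_p, forall b' : 'cV[R]_p,
    ssl_loglik alpha d Xt Yt X Y b' <= ssl_loglik alpha d Xt Yt X Y b.
Proof.
move=> p1 n1 m1 a1 d0 rk.
have [c0|cpos] := lerP (c_alpha alpha d) 0.
  by exists 0 => b'; rewrite !loglik0.
set L := ssl_loglik alpha d Xt Yt X Y.
have [C [C0 hC]] := coercive _ _ _ _ rk.
set D := d `^ (- alpha).
have D0 : 0 < D by rewrite powR_gt0.
set N := (n + m)%:R^-1 : R.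
have N0 : 0 < N by rewrite invr_gt0 ltr0n addn_gt0 n1.
set SY := \sum_(k < m) `|Y k|.
set c := c_alpha alpha d.
pose B := (ln c - L 0) / (N * D) + SY + m%:R.
pose r := C * B.
have key : forall b : 'cV_p, L 0 <= L b -> forall i, `|b i 0| <= r.
  move=> b hb i; apply: le_trans (hC b i) _; rewrite /r ler_wpM2l //.
  have u := upper _ _ _ _ _ _ Xt Yt X Y b n1 cpos.
  set S := \sum_(k < m) `|Y k - dotp b (X k)| `^ alpha in u.
  set T := \sum_(k < m) `|dotp b (X k)|.
  have lb : T - SY - m%:R <= S.
    have -> : T - SY - m%:R = \sum_(k < m) (`|dotp b (X k)| - `|Y k| - 1).
      by rewrite !sumrB sumr_const card_ord.
    apply: ler_sum => k _.
    exact: tri_aux.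
  have hS : S <= (ln c - L 0) / (N * D).
    rewrite ler_pdivlMr ?mulr_gt0 //.
    have -> : S * (N * D) = N * (D * S) by ring.
    have u' : L b <= ln c - N * (D * S) := u.
    exact: aux1 u' hb.
  rewrite /B; exact: aux2 lb hS.
pose A := [set v : 'rV[R]_p | forall i, `[- r, r]%classic (v ord0 i)].
have inA : forall b : 'cV_p, L 0 <= L b -> A b^T.
  move=> b hb i /=; rewrite mxE in_itv /= -ler_norml.
  exact: key.
have A0 : A 0 by have := inA 0 (lexx _); rewrite trmx0.
have Ac : compact A.
  by apply: (@rV_compact _ _ (fun=> `[- r, r]%classic)) => _; exact: segment_compact.
have Fc := F_cont _ _ _ _ _ _ Xt Yt X Y n1 a1 cpos.
have Fw : {within A, continuous (fun v : 'rV[R]_p => L v^T)}.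
  by apply: continuous_subspaceT; exact: Fc.
have [v vA vmax] := compact_EVT_max (ex_intro _ 0 A0) Ac Fw.
exists v^T => b'.
have [h|h] := pselect (L 0 <= L b'); last (have {}h : L b' < L 0 by rewrite ltNge; apply/negP).
  have h3 : (b'^T : 'rV[R]_p) \in A by apply: mem_set; exact: inA.
  have := vmax b'^T h3.
  by rewrite trmxK.
have h3 : (0 : 'rV[R]_p) \in A by apply: mem_set.
have := vmax 0 h3.
rewrite trmx0 => h2.
exact: le_trans (ltW h) h2.
Qed.
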